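(* Let $(X,\sigma)$ be a one-sided subshift. If there is $z\in X$ such that the set $\{y\in X:(y,z)\in\mathrm{SProx}(\sigma)\}$ is uncountable, then $(X,\sigma)$ has a Cantor syndetically scrambled set.
   Context: A one-sided subshift is a nonempty closed $\sigma$-invariant subset of $\mathcal A^{\mathbb N_0}$ ($\mathcal A$ finite) with the left shift $\sigma$. $\mathrm{Asy}(\sigma)=\{(x,y):d(\sigma^nx,\sigma^ny)\to0\}$; $\mathrm{SProx}(\sigma)=\{(x,y):\{n:d(\sigma^nx,\sigma^ny)<\varepsilon\}$ syndetic for all $\varepsilon>0\}$, syndetic meaning meeting every subset of $\mathbb N$ with arbitrarily long runs of consecutive integers. A syndetically scrambled set is a set with at least two points all of whose distinct pairs lie in $\mathrm{SProx}(\sigma)\setminus\mathrm{Asy}(\sigma)$. A Cantor set is a nonempty compact perfect totally disconnected set. *)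

(* Defs.v *)
From mathcomp Require Import all_boot.
Set Implicit Arguments. Unset Strict Implicit. Unset Printing Implicit Defensive.

Section Shift.
Variable A : finType.

Definition seqA := nat -> A.

Definition shift (x : seqA) : seqA := fun n => x (n.+1).
Definition shiftn (n : nat) (x : seqA) : seqA := fun m => x (n + m).

(* x and y agree on the first k coordinates: the basic neighbourhoods of the
   product topology; for the standard metric d(x,y)=2^{-min{n : x n <> y n}},
   d(x,y) < 2^{-k} iff x,y agree on the first k+1 coordinates. *)
Definition agree (k : nat) (x y : seqA) : Prop := forall i, i < k -> x i = y i.

Definition shset := seqA -> Prop.

Definition is_open (U : shset) : Prop :=
  forall x, U x -> exists k, forall y, agree k x y -> U y.

Definition is_closed (X : shset) : Prop :=
  forall x, (forall k, exists y, X y /\ agree k x y) -> X x.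

Definition subshift (X : shset) : Prop :=
  (exists x, X x) /\ is_closed X /\ (forall x, X x -> X (shift x)).

Definition converges (u : nat -> seqA) (x : seqA) : Prop :=
  forall k, exists N, forall n, N <= n -> agree k (u n) x.

(* compactness (A^{N_0} is metrizable, so sequential compactness) *)
Definition is_compact (S : shset) : Prop :=
  forall u : nat -> seqA, (forall n, S (u n)) ->
    exists (phi : nat -> nat) (x : seqA),
      (forall n, phi n < phi n.+1) /\ S x /\ converges (fun n => u (phi n)) x.

Definition is_perfect (S : shset) : Prop :=
  forall x, S x -> forall k, exists y, S y /\ y <> x /\ agree k x y.

Definition is_connected (C : shset) : Prop :=
  forall U V : shset, is_open U -> is_open V ->
    (forall x, C x -> U x \/ V x) ->
    (forall x, C x -> U x -> V x -> False) ->
    (forall x, C x -> U x) \/ (forall x, C x -> V x).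

Definition is_totally_disconnected (S : shset) : Prop :=
  forall C : shset, (forall x, C x -> S x) -> is_connected C ->
    forall x y, C x -> C y -> x = y.

Definition is_Cantor (S : shset) : Prop :=
  (exists x, S x) /\ is_compact S /\ is_perfect S /\ is_totally_disconnected S.

Definition thick (T : nat -> Prop) : Prop :=
  forall L, exists m, 1 <= m /\ forall i, i < L -> T (m + i).
Definition syndetic (S : nat -> Prop) : Prop :=
  forall T, (forall n, T n -> 1 <= n) -> thick T -> exists n, 1 <= n /\ S n /\ T n.

Definition Asy (x y : seqA) : Prop :=
  forall k, exists N, forall n, N <= n -> agree k (shiftn n x) (shiftn n y).

Definition SProx (x y : seqA) : Prop :=
  forall k, syndetic (fun n => agree k (shiftn n x) (shiftn n y)).

Definition synd_scrambled (S : shset) : Prop :=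
  (exists x y, S x /\ S y /\ x <> y) /\
  (forall x y, S x -> S y -> x <> y -> SProx x y /\ ~ Asy x y).

Definition countable_set (S : shset) : Prop :=
  exists f : seqA -> nat, forall x y, S x -> S y -> f x = f y -> x = y.

End Shift.

(* Main.v *)
Require Import Defs.
From mathcomp Require Import all_boot zify.
From Stdlib Require Import Classical ClassicalEpsilon FunctionalExtensionality.
Set Implicit Arguments. Unset Strict Implicit. Unset Printing Implicit Defensive.


Lemma choice_fun (T U : Type) (P : T -> U -> Prop) :
  (forall x, exists y, P x y) -> exists f : T -> U, forall x, P x (f x).
Proof.
move=> H; exists (fun x => proj1_sig (constructive_indefinite_description _ (H x))).
by move=> x; case: (constructive_indefinite_description _ (H x)).
Qed.

Definition unc (A : finType) (V : shset A) := ~ countable_set V.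

Lemma countable_sub (A : finType) (V W : shset A) :
  (forall y, V y -> W y) -> countable_set W -> countable_set V.
Proof. by move=> HVW [f Hf]; exists f => x y Hx Hy; apply: Hf; auto. Qed.

Lemma unc_sub (A : finType) (V W : shset A) :
  (forall y, V y -> W y) -> unc V -> unc W.
Proof. by move=> HVW HV HW; apply: HV; apply: countable_sub HW. Qed.

Lemma countable_of_mem (A : finType) (V : shset A) :
  (forall y, V y -> countable_set V) -> countable_set V.
Proof.
move=> H; case: (classic (exists y, V y)) => [[y Hy]|Hn]; first exact: H Hy.
by exists (fun _ => 0) => x y Hx; exfalso; apply: Hn; exists x.
Qed.

Lemma unc_mem (A : finType) (V : shset A) : unc V -> exists y, V y.
Proof.
move=> H; apply: NNPP => Hn; apply: H; apply: countable_of_mem => y Hy.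
by exfalso; apply: Hn; exists y.
Qed.

Lemma countable_fibers (A : finType) (T : countType) (c : seqA A -> T) (V : shset A) :
  (forall t, countable_set (fun y => V y /\ c y = t)) -> countable_set V.
Proof.
move=> H; have [F HF] := choice_fun H.
exists (fun y => pickle (c y, F (c y) y)) => x y Hx Hy /(pcan_inj pickleK) [Hc HF'].
apply: (HF (c x)); [by split | by split | by rewrite HF' Hc].
Qed.

Lemma unc_fiber (A : finType) (T : countType) (c : seqA A -> T) (V : shset A) :
  unc V -> exists t, unc (fun y => V y /\ c y = t).
Proof.
move=> HV; apply: NNPP => Hn; apply: HV; apply: (@countable_fibers A T c V) => t.
by apply: NNPP => Ht; apply: Hn; exists t.
Qed.


Definition blk (A : finType) (M l : nat) (y : seqA A) : seq A := mkseq (fun i => y (M + i)) l.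
Definition cls (A : finType) (V : shset A) M l (b : seq A) : shset A :=
  fun y => V y /\ blk M l y = b.

Lemma take_blk (A : finType) M l l' (y : seqA A) : l <= l' -> take l (blk M l' y) = blk M l y.
Proof. by move=> H; rewrite /blk /mkseq -map_take take_iota (minn_idPl H). Qed.

Lemma blk_eq (A : finType) M l (y y' : seqA A) :
  blk M l y = blk M l y' -> forall i, i < l -> y (M + i) = y' (M + i).
Proof.
move=> H i Hi; have := congr1 (nth (y 0) ^~ i) H.
by rewrite /blk !nth_mkseq.
Qed.

Lemma refine (A : finType) (V : shset A) M l b l' : l <= l' -> unc (cls V M l b) ->
  exists b', take l b' = b /\ unc (cls V M l' b').
Proof.
move=> Hl Hu; have [b' Hb'] := unc_fiber (blk M l') Hu.
exists b'; split.
  by have [y [[Vy Hyb] Hyb']] := unc_mem Hb'; rewrite -Hyb' take_blk.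
by apply: unc_sub Hb' => y [[Vy _] Hy].
Qed.

Lemma split_unc (A : finType) (V : shset A) M : unc V ->
  exists l b1 b2, b1 <> b2 /\ unc (cls V M l b1) /\ unc (cls V M l b2).
Proof.
move=> HV; apply: NNPP => Hn.
have U : forall l b1 b2, unc (cls V M l b1) -> unc (cls V M l b2) -> b1 = b2.
  move=> l b1 b2 H1 H2; apply: NNPP => Hne; apply: Hn; by exists l, b1, b2.
have Hex : forall l, exists b, unc (cls V M l b).
  by move=> l; apply: (unc_fiber (blk M l) HV).
have [beta Hbeta] := choice_fun Hex.
pose E y := forall l, blk M l y = beta l.
have Hex2 : forall y, exists l, ~ E y -> blk M l y <> beta l.
  move=> y; case: (classic (E y)) => HE; first by exists 0.
  have [l Hl] := not_all_ex_not _ _ HE; by exists l.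
have [lf Hlf] := choice_fun Hex2.
pose c (y : seqA A) : (seq A + (seq A * nat))%type :=
  if excluded_middle_informative (E y) then inl (blk 0 M y) else inr (blk M (lf y) y, lf y).
apply: HV; apply: (@countable_fibers A _ c V) => [[w|[b l]]].
  exists (fun _ => 0) => x y [Vx Hx] [Vy Hy] _.
  rewrite /c in Hx Hy.
  case: excluded_middle_informative Hx => // Ex [Hx].
  case: excluded_middle_informative Hy => // Ey [Hy].
  apply: functional_extensionality => i.
  case: (ltnP i M) => Hi.
    by have := blk_eq (etrans Hx (esym Hy)) Hi.
  have Hb : blk M (i - M).+1 x = blk M (i - M).+1 y by rewrite Ex Ey.
  have := blk_eq Hb (ltnSn _); by rewrite subnKC.
apply: countable_of_mem => y0 [V0 H0].
rewrite /c in H0; case: excluded_middle_informative H0 => // E0 [Hb Hl].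
have Hne : b <> beta l by rewrite -Hb -Hl; apply: Hlf.
have Hc : countable_set (cls V M l b).
  by apply: NNPP => Hu; apply: Hne; apply: U Hu (Hbeta l).
apply: countable_sub Hc => y [Vy Hy]; split => //.
rewrite /c in Hy; case: excluded_middle_informative Hy => // Ey [Hb' Hl'].
by rewrite -Hl' -Hb'.
Qed.



Lemma take_unc (A : finType) (W : shset A) M l l' c b : l <= l' ->
  unc (cls (cls W M l c) M l' b) -> take l b = c.
Proof.
move=> Hl Hu; have [y [[Wy Hc] Hb]] := unc_mem Hu.
by rewrite -Hb take_blk.
Qed.

Lemma distinct_blocks (A : finType) m (W : nat -> shset A) M :
  (forall i, i < m -> unc (W i)) ->
  exists l (b : nat -> seq A), (forall i, i < m -> unc (cls (W i) M l (b i))) /\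
     (forall i j, i < m -> j < m -> i <> j -> b i <> b j).
Proof.
elim: m => [|m IH] HW; first by exists 0, (fun _ => [::]).
have [l [b [Hu Hd]]] := IH (fun i Hi => HW i (ltnW Hi)).
have [c0 Hc0] := unc_fiber (blk M l) (HW m (ltnSn m)).
case: (classic (exists j, j < m /\ b j = c0)) => [[j [Hj Hbj]]|Hno]; last first.
  exists l, (fun i => if i == m then c0 else b i); split.
    move=> i Hi; case: eqP => [->|Him] //; apply: Hu; lia.
  move=> i k Hi Hk Hik; case: eqP => Him; case: eqP => Hkm.
  - by exfalso; apply: Hik; rewrite Him Hkm.
  - move=> Hc; apply: Hno; exists k; split; [lia | by rewrite -Hc].
  - move=> Hc; apply: Hno; exists i; split; [lia | by rewrite Hc].
  - apply: Hd => //; lia.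
have Hj0 : unc (cls (W j) M l c0) by rewrite -Hbj; apply: Hu.
have [l1 [d1 [d2 [Hd12 [Hu1 Hu2]]]]] := split_unc M Hj0.
pose l' := maxn l l1.
have [e1 [He1 Hue1]] := refine (leq_maxr l l1) Hu1.
have [e2 [He2 Hue2]] := refine (leq_maxr l l1) Hu2.
have [f [Hf Huf]] := refine (leq_maxl l l1) Hc0.
have Hex : forall i, exists b'', i < m -> take l b'' = b i /\ unc (cls (W i) M l' b'').
  move=> i; case: (ltnP i m) => Hi; last by exists [::].
  by have [b'' [H1 H2]] := refine (leq_maxl l l1) (Hu i Hi); exists b''.
have [bb Hbb] := choice_fun Hex.
pose e := if f == e1 then e2 else e1.
have Hef : e <> f.
  rewrite /e; case: eqP => [->|Hne] He; last by apply: Hne.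
  by apply: Hd12; rewrite -He1 -He2 He.
have Hue : unc (cls (cls (W j) M l c0) M l' e) by rewrite /e; case: eqP.
have Hte : take l e = c0 by apply: take_unc Hue; apply: leq_maxl.
exists l'; exists (fun i => if i == m then f else if i == j then e else bb i); split.
  move=> i Hi; case: eqP => [->|Him] //; case: eqP => [->|Hij].
    by apply: unc_sub Hue => y [[Wy _] Hy].
  by have [] := Hbb i ltac:(lia).
have key : forall i, i < m.+1 ->
    take l (if i == m then f else if i == j then e else bb i) = b (if i == m then j else i).
  move=> i Hi; case: (eqVneq i m) => [_|Him] /=; first by rewrite Hf Hbj.
  case: (eqVneq i j) => [->|Hij] /=; first by rewrite Hte Hbj.
  by have [] := Hbb i ltac:(lia).
move=> i k Hi Hk Hik Heq.
have Hk' := congr1 (take l) Heq; rewrite (key i Hi) (key k Hk) in Hk'.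
case Him: (i == m) Heq Hk'; case Hkm: (k == m) => /= Heq Hk'.
- by apply: Hik; rewrite (eqP Him) (eqP Hkm).
- case Hkj: (k == j) Heq => Heq; first by apply: Hef.
  apply: (Hd j k) => //; [lia | by move=> Hjk; move: Hkj; rewrite Hjk eqxx].
- case Hij: (i == j) Heq => Heq; first by apply: Hef.
  apply: (Hd i j) => //; [lia | by move=> Hjk; move: Hij; rewrite Hjk eqxx].
- apply: (Hd i k) => //; lia.
Qed.


Definition Ysyn (A : finType) (z : seqA A) j L (y : seqA A) :=
  forall a, 1 <= a -> exists n0, a <= n0 < a + L /\ agree j (shiftn n0 y) (shiftn n0 z).

Lemma Ysyn_mono (A : finType) (z : seqA A) j L L' y : L <= L' -> Ysyn z j L y -> Ysyn z j L' y.
Proof.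
move=> HL H a Ha; have [n0 [Hn Hag]] := H a Ha; exists n0; split => //; lia.
Qed.

Lemma sprox_Ysyn (A : finType) (z y : seqA A) : SProx y z -> forall j, exists L, Ysyn z j L y.
Proof.
move=> H j; apply: NNPP => Hn.
pose T n := 1 <= n /\ ~ agree j (shiftn n y) (shiftn n z).
have [n [Hn1 [Hag [_ Hnag]]]] : exists n, 1 <= n /\ agree j (shiftn n y) (shiftn n z) /\ T n.
  apply: (H j T); first by move=> n [].
  move=> L; apply: NNPP => HL; apply: Hn; exists L => a Ha; apply: NNPP => Hna.
  apply: HL; exists a; split => // i Hi; split; first lia.
  move=> Hag; apply: Hna; exists (a + i); split => //; lia.
by apply: Hnag.
Qed.

Lemma Ysyn_SProx (A : finType) (z x y : seqA A) :
  (forall j, exists L, Ysyn z j L x) -> (forall j, exists L, Ysyn z j L y) -> SProx x y.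
Proof.
move=> Hx Hy k T HT Hth.
have [L1 HL1] := Hy k.
have [L2 HL2] := Hx (L1 + k).
have [m0 [Hm0 Hrun]] := Hth (L2 + L1).
have [n0 [Hn0 Hag0]] := HL2 m0 Hm0.
have [n1 [Hn1 Hag1]] := HL1 n0 ltac:(lia).
exists n1; split; first lia; split; last by have := Hrun (n1 - m0) ltac:(lia); rewrite subnKC //; lia.
move=> i Hi; rewrite /shiftn.
have := Hag0 (n1 - n0 + i) ltac:(lia); rewrite /shiftn addnA subnKC; last lia.
move=> ->; have := Hag1 i Hi; rewrite /shiftn => ->; done.
Qed.


Definition G (A : finType) (X : shset A) (z : seqA A) k n (L : nat -> nat) (P : nat -> seqA A) i : shset A :=
  fun y => X y /\ SProx y z /\ agree n y (P i) /\ forall j, j < k -> Ysyn z j (L j) y.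

Definition state (A : finType) := (nat * (nat -> nat) * (nat -> seqA A))%type.

Definition Inv (A : finType) (X : shset A) z k (st : state A) :=
  forall i, i < 2 ^ k -> unc (G X z k st.1.1 st.1.2 st.2 i).

Definition Rel (A : finType) (X : shset A) z k (st st' : state A) :=
  st.1.1 < st'.1.1 /\ (forall j, j < k -> st'.1.2 j = st.1.2 j) /\
  (forall i, i < 2 ^ k.+1 -> agree st.1.1 (st'.2 i) (st.2 i./2)) /\
  (forall i i', i < 2 ^ k.+1 -> i' < 2 ^ k.+1 -> i <> i' ->
      exists t, st.1.1 <= t < st'.1.1 /\ st'.2 i t <> st'.2 i' t) /\
  Inv X z k.+1 st'.

Lemma bound_fun (f : nat -> nat) m : exists M, forall i, i < m -> f i <= M.
Proof.
elim: m => [|m [M HM]]; first by exists 0.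
exists (maxn M (f m)) => i Hi; case: (ltnP i m) => H.
  by apply: leq_trans (HM i H) (leq_maxl _ _).
have -> : i = m by lia.
exact: leq_maxr.
Qed.

Lemma blk_neq (A : finType) M l (y y' : seqA A) : blk M l y <> blk M l y' ->
  exists t, M <= t < M + l /\ y t <> y' t.
Proof.
move=> H; apply: NNPP => Hn; apply: H; apply: (@eq_from_nth _ (y 0)).
  by rewrite !size_mkseq.
move=> i; rewrite size_mkseq => Hi; rewrite !nth_mkseq //.
apply: NNPP => Hne; apply: Hn; exists (M + i); split => //; lia.
Qed.

Lemma blk_agree (A : finType) n l (y y' : seqA A) :
  agree n y y' -> blk n l y = blk n l y' -> agree (n + l) y y'.
Proof.
move=> Ha Hb t Ht; case: (ltnP t n) => Htn; first exact: Ha.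
have := blk_eq Hb (i := t - n) ltac:(lia); by rewrite subnKC.
Qed.

Lemma agree_sym (A : finType) k (x y : seqA A) : agree k x y -> agree k y x.
Proof. by move=> H i Hi; rewrite H. Qed.
Lemma agree_trans (A : finType) k (x y w : seqA A) : agree k x y -> agree k y w -> agree k x w.
Proof. by move=> H1 H2 i Hi; rewrite H1 // H2. Qed.
Lemma agree_le (A : finType) k k' (x y : seqA A) : k <= k' -> agree k' x y -> agree k x y.
Proof. by move=> Hk H i Hi; apply: H; lia. Qed.

Lemma step (A : finType) (X : shset A) z k (st : state A) :
  Inv X z k st -> exists st', Rel X z k st st'.
Proof.
case: st => [[n L] P] /= HI.
pose W i := G X z k n L P i./2.
have HW : forall i, i < 2 ^ k.+1 -> unc (W i).
  move=> i Hi; apply: HI; rewrite ltn_half_double -mul2n -expnS //.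
have [l [b [Hu Hd]]] := distinct_blocks n HW.
have HLc : forall y, exists L0, SProx y z -> Ysyn z k L0 y.
  move=> y; case: (classic (SProx y z)) => H; last by exists 0.
  by have [L0 HL0] := sprox_Ysyn H k; exists L0.
have [Lc HLc'] := choice_fun HLc.
have HLf : forall i, exists t, i < 2 ^ k.+1 ->
    unc (fun y => cls (W i) n l (b i) y /\ Lc y = t).
  move=> i; case: (ltnP i (2 ^ k.+1)) => Hi; last by exists 0.
  by have [t Ht] := unc_fiber Lc (Hu i Hi); exists t.
have [Lf HLf'] := choice_fun HLf.
have [Lm HLm] := bound_fun Lf (2 ^ k.+1).
pose D i := fun y => cls (W i) n l (b i) y /\ Ysyn z k Lm y.
have HD : forall i, i < 2 ^ k.+1 -> unc (D i).
  move=> i Hi; apply: (unc_sub _ (HLf' i Hi)) => y [Hy Hl]; split => //.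
  apply: (Ysyn_mono (HLm i Hi)); rewrite -Hl; apply: HLc'.
  by case: Hy => [[_ [H _]] _].
have HY : forall i, exists y, i < 2 ^ k.+1 -> D i y.
  move=> i; case: (ltnP i (2 ^ k.+1)) => Hi; last by exists z.
  by have [y Hy] := unc_mem (HD i Hi); exists y.
have [Y HY'] := choice_fun HY.
have H2 : 1 < 2 ^ k.+1 by rewrite expnS; have := expn_gt0 2 k; lia.
have Hl : 0 < l.
  case: (posnP l) => // Hl0; exfalso.
  have [[_ H0] _] := HY' 0 (ltnW H2).
  have [[_ H1] _] := HY' 1 H2.
  apply: (Hd 0 1) => //; first lia.
  by rewrite -H0 -H1 Hl0.
exists (n + l, fun j => if j == k then Lm else L j, Y) ; rewrite /Rel /=; split; first lia.
split; first by move=> j Hj; have -> : (j == k) = false by apply/eqP; lia.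
split.
  by move=> i Hi; have [[[_ [_ [H _]]] _] _] := HY' i Hi.
split.
  move=> i i' Hi Hi' Hii'.
  have [[_ Hb] _] := HY' i Hi; have [[_ Hb'] _] := HY' i' Hi'.
  apply: blk_neq; rewrite Hb Hb'; exact: Hd.
move=> i Hi; apply: unc_sub (HD i Hi) => y [[[Xy [Sy [Ay Yy]]] By] Ky].
split => //; split => //; split.
  have [[[_ [_ [AY _]]] BY] _] := HY' i Hi.
  apply: blk_agree; first by apply: agree_trans Ay (agree_sym AY).
  by rewrite By BY.
move=> j Hj; change (Ysyn z j (if j == k then Lm else L j) y); case: (eqVneq j k) => [Hjk|Hjk]; [by subst j | apply: Yy; lia].
Qed.


Definition stepf (A : finType) (X : shset A) z k (st : state A) : state A :=
  match excluded_middle_informative (Inv X z k st) with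
  | left H => proj1_sig (constructive_indefinite_description _ (step H))
  | right _ => st end.

Fixpoint stseq (A : finType) (X : shset A) (z : seqA A) k : state A :=
  match k with 0 => (0, fun _ => 0, fun _ => z) | k'.+1 => stepf X z k' (stseq X z k') end.

Lemma stseq_spec (A : finType) (X : shset A) z : unc (fun y => X y /\ SProx y z) ->
  forall k, Inv X z k (stseq X z k) /\ Rel X z k (stseq X z k) (stseq X z k.+1).
Proof.
move=> Hu; elim => [|k [IH1 IH2]].
  have I0 : Inv X z 0 (stseq X z 0).
    move=> i Hi; apply: unc_sub Hu => y [Xy Sy]; split => //; split => //; split => //.
  split => //=; rewrite /stepf; case: excluded_middle_informative => // H.
  by case: constructive_indefinite_description.
have I1 : Inv X z k.+1 (stseq X z k.+1) by case: IH2 => [_ [_ [_ [_ H]]]].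
split => //; rewrite [stseq X z k.+2]/= /stepf; case: excluded_middle_informative => // H.
by case: constructive_indefinite_description.
Qed.

Fixpoint code (s : nat -> bool) k : nat :=
  match k with 0 => 0 | k'.+1 => s k' + (code s k').*2 end.

Lemma code_lt s k : code s k < 2 ^ k.
Proof. elim: k => [|k IH] //=; rewrite expnS; case: (s k) => /=; lia. Qed.

Lemma code_half s k : (code s k.+1)./2 = code s k.
Proof. by rewrite /= half_bit_double. Qed.

Lemma code_agree s s' k : (forall i, i < k -> s i = s' i) -> code s k = code s' k.
Proof.
elim: k => [|k IH] H //=; rewrite H // IH // => i Hi; apply: H; lia.
Qed.

Lemma code_neq s s' j k : s j <> s' j -> j < k -> code s k <> code s' k.
Proof.
move=> Hj; elim: k => [|k IH] Hk //= Heq.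
have Hh := congr1 half Heq; rewrite !half_bit_double in Hh.
case: (ltnP j k) => Hjk; first by apply: IH.
have Ekj : k = j by lia.
move: Heq; rewrite Hh Ekj => /addIn; case: (s j) (s' j) Hj => [] [] //.
Qed.

Unset Implicit Arguments.

Definition nn {A : finType} (X : shset A) z k := (stseq X z k).1.1.
Definition LL {A : finType} (X : shset A) z k := (stseq X z k).1.2.
Definition PP {A : finType} (X : shset A) z k := (stseq X z k).2.
Definition Phi {A : finType} (X : shset A) z (s : nat -> bool) : seqA A :=
  fun t => PP X z t.+1 (code s t.+1) t.

Lemma nn_ge {A : finType} {X : shset A} {z : seqA A} : unc (fun y => X y /\ SProx y z) ->
  forall k, k <= nn X z k.
Proof.
move=> Hu; elim => [|k IH] //; have [_ [H _]] := stseq_spec Hu k.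
rewrite /nn in IH *; lia.
Qed.

Lemma nn_mono {A : finType} {X : shset A} {z : seqA A} : unc (fun y => X y /\ SProx y z) ->
  forall k k', k <= k' -> nn X z k <= nn X z k'.
Proof.
move=> Hu k k'; elim: k' => [|k' IH] Hk; first by have -> : k = 0 by lia.
case: (ltnP k k'.+1) => H; last by have -> : k = k'.+1 by lia.
have [_ [H1 _]] := stseq_spec Hu k'; rewrite /nn in IH *.
have := IH ltac:(lia); lia.
Qed.

Lemma LL_stable {A : finType} {X : shset A} {z : seqA A} : unc (fun y => X y /\ SProx y z) ->
  forall j k, j < k -> LL X z k j = LL X z j.+1 j.
Proof.
move=> Hu j; elim => [|k IH] Hk //.
case: (ltnP j k) => H; last by have -> : k = j by lia.
have [_ [_ [H1 _]]] := stseq_spec Hu k; rewrite /LL in IH *.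
by rewrite H1 // IH.
Qed.

Lemma PP_cons {A : finType} {X : shset A} {z : seqA A} : unc (fun y => X y /\ SProx y z) ->
  forall s k k', k <= k' -> agree (nn X z k) (PP X z k' (code s k')) (PP X z k (code s k)).
Proof.
move=> Hu s k k'; elim: k' => [|k' IH] Hk.
  by have -> : k = 0 by lia.
case: (ltnP k k'.+1) => H; last by have -> : k = k'.+1 by lia.
have [_ [_ [_ [H1 _]]]] := stseq_spec Hu k'.
have := H1 (code s k'.+1) (code_lt s k'.+1); rewrite code_half => Ha.
apply: agree_trans (IH ltac:(lia)).
apply: agree_le Ha; exact: nn_mono Hu _ _ _.
Qed.

Lemma Phi_agree {A : finType} {X : shset A} {z : seqA A} : unc (fun y => X y /\ SProx y z) ->
  forall s k, agree (nn X z k) (Phi X z s) (PP X z k (code s k)).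
Proof.
move=> Hu s k t Ht; rewrite /Phi.
have Hn := nn_ge Hu.
case: (ltnP t.+1 k) => H.
  symmetry; apply: (PP_cons Hu s t.+1 k (ltnW H)); have := Hn t.+1; lia.
by apply: (PP_cons Hu s k t.+1 H).
Qed.

Lemma Phi_mem {A : finType} {X : shset A} {z : seqA A} : unc (fun y => X y /\ SProx y z) ->
  forall s k, exists y, X y /\ agree (nn X z k) (Phi X z s) y /\
     forall j, j < k -> Ysyn z j (LL X z k j) y.
Proof.
move=> Hu s k; have [HI _] := stseq_spec Hu k.
have [y [Xy [_ [Ay Yy]]]] := unc_mem (HI _ (code_lt s k)).
exists y; split => //; split => //.
move=> i Hi; rewrite (Phi_agree Hu s k) // Ay //.
Qed.

Lemma Phi_X {A : finType} {X : shset A} {z : seqA A} : subshift X -> unc (fun y => X y /\ SProx y z) ->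
  forall s, X (Phi X z s).
Proof.
move=> [_ [HX _]] Hu s; apply: HX => k.
have [y [Xy [Ay _]]] := Phi_mem Hu s k.
exists y; split => //; apply: agree_le Ay; exact: nn_ge.
Qed.

Lemma Phi_Ysyn {A : finType} {X : shset A} {z : seqA A} : unc (fun y => X y /\ SProx y z) ->
  forall s j, Ysyn z j (LL X z j.+1 j) (Phi X z s).
Proof.
move=> Hu s j a Ha.
pose k := (a + LL X z j.+1 j + j).+1.
have [y [_ [Ay Yy]]] := Phi_mem Hu s k.
have := Yy j ltac:(lia); rewrite (LL_stable Hu) ?/k; last lia.
move=> /(_ a Ha) [n0 [Hn0 Hag]]; exists n0; split => // i Hi.
have := Hag i Hi; rewrite /shiftn => <-; apply: Ay.
have := nn_ge Hu k; rewrite /k; lia.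
Qed.

Lemma Phi_close {A : finType} {X : shset A} {z : seqA A} : unc (fun y => X y /\ SProx y z) ->
  forall s s' k, (forall i, i < k -> s i = s' i) -> agree (nn X z k) (Phi X z s) (Phi X z s').
Proof.
move=> Hu s s' k H.
apply: agree_trans (Phi_agree Hu s k) _; rewrite (code_agree H).
exact: agree_sym (Phi_agree Hu s' k).
Qed.

Lemma Phi_far {A : finType} {X : shset A} {z : seqA A} : unc (fun y => X y /\ SProx y z) ->
  forall s s' j k, s j <> s' j -> j < k ->
  exists t, k <= t /\ Phi X z s t <> Phi X z s' t.
Proof.
move=> Hu s s' j k Hj Hk.
have [_ [_ [_ [_ [Hd _]]]]] := stseq_spec Hu k.
have Hc := code_neq Hj (leqW Hk).
have [t [Ht Hne]] := Hd _ _ (code_lt s k.+1) (code_lt s' k.+1) Hc.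
exists t; split; first by have := nn_ge Hu k; rewrite /nn in Ht *; lia.
have Ht2 : t < nn X z k.+1 by rewrite /nn; lia.
by rewrite (Phi_agree Hu s k.+1 t Ht2) (Phi_agree Hu s' k.+1 t Ht2).
Qed.

Set Implicit Arguments.

Definition Inf (u : nat -> nat -> bool) (g : nat -> bool) k :=
  forall N, exists n, N <= n /\ forall i, i < k -> u n i = g i.
Definition upd (g : nat -> bool) k b := fun i => if i == k then b else g i.

Lemma Inf_ext u g k : Inf u g k -> exists b, Inf u (upd g k b) k.+1.
Proof.
move=> H; apply: NNPP => Hn.
have Hb : forall b, exists N, forall n, N <= n -> ~ forall i, i < k.+1 -> u n i = upd g k b i.
  move=> b; apply: NNPP => Hb; apply: Hn; exists b => N; apply: NNPP => HN; apply: Hb.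
  exists N => n Hn' Hall; apply: HN; by exists n.
have [N0 H0] := Hb false; have [N1 H1] := Hb true.
have [n [Hn' Hm]] := H (maxn N0 N1).
have Hm' : forall i, i < k.+1 -> u n i = upd g k (u n k) i.
  move=> i Hi; rewrite /upd; case: eqP => [->|Hik] //; apply: Hm; lia.
case E: (u n k) Hm' => Hm''.
  by apply: (H1 n) => //; lia.
by apply: (H0 n) => //; lia.
Qed.

Definition extf u k (g : nat -> bool) : nat -> bool :=
  match excluded_middle_informative (Inf u g k) with
  | left H => upd g k (proj1_sig (constructive_indefinite_description _ (Inf_ext H)))
  | right _ => g end.

Fixpoint gseq u k : nat -> bool :=
  match k with 0 => fun _ => false | k'.+1 => extf u k' (gseq u k') end.

Lemma gseq_spec u k : Inf u (gseq u k) k /\ forall i, i < k -> gseq u k.+1 i = gseq u k i.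
Proof.
elim: k => [|k [IH _]].
  split; last by []. by move=> N; exists N.
have H1 : Inf u (gseq u k.+1) k.+1.
  rewrite /= /extf; case: excluded_middle_informative => // H.
  by case: constructive_indefinite_description.
split => // i Hi; rewrite [gseq u k.+2]/= /extf; case: excluded_middle_informative => // H.
case: constructive_indefinite_description => b _ /=; rewrite /upd.
by have -> : (i == k.+1) = false by apply/eqP; lia.
Qed.

Lemma bool_compact (u : nat -> nat -> bool) : exists (phi : nat -> nat) (tau : nat -> bool),
  (forall n, phi n < phi n.+1) /\ forall n i, i < n -> u (phi n) i = tau i.
Proof.
pose tau i := gseq u i.+1 i.
have Hg : forall k i, i < k -> gseq u k i = tau i.
  elim => [|k IH] i Hi //; case: (ltnP i k) => H.
    by have [_ H2] := gseq_spec u k; rewrite H2 // IH.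
  by have -> : i = k by lia.
have Ht : forall k N, exists n, N <= n /\ forall i, i < k -> u n i = tau i.
  move=> k N; have [H _] := gseq_spec u k; have [n [Hn Hm]] := H N.
  by exists n; split => // i Hi; rewrite Hm // Hg.
pose phi := fix f n := match n with 0 => 0
   | n'.+1 => proj1_sig (constructive_indefinite_description _ (Ht n'.+1 (f n').+1)) end.
exists phi, tau; split.
  move=> n /=; case: constructive_indefinite_description => m [Hm _] /=; exact: Hm.
case => [|n] i Hi //=; case: constructive_indefinite_description => m [_ Hm] /=; exact: Hm.
Qed.


Lemma all_totally_disconnected (A : finType) (S : shset A) : is_totally_disconnected S.
Proof.
move=> C _ HC x y Cx Cy; apply: NNPP => Hne.
have [i Hi] : exists i, x i <> y i.
  apply: NNPP => Hn; apply: Hne; apply: functional_extensionality => i.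
  by apply: NNPP => Hi; apply: Hn; exists i.
pose U := fun w : seqA A => w i = x i.
pose V := fun w : seqA A => w i <> x i.
have oU : is_open U by move=> w Hw; exists i.+1 => w' Hag; rewrite /U -Hag.
have oV : is_open V by move=> w Hw; exists i.+1 => w' Hag; rewrite /V -Hag.
case: (HC U V oU oV).
- by move=> w _; rewrite /U /V; case: (eqVneq (w i) (x i)) => H; [left|right; apply/eqP].
- by move=> w _ H1 H2.
- by move=> H; apply: Hi; rewrite (H y Cy).
- by move=> H; apply: (H x Cx).
Qed.

Theorem proposition3p5 (A : finType) (X : shset A) :
  subshift X ->
  (exists z, X z /\ ~ countable_set (fun y => X y /\ SProx y z)) ->
  exists S : shset A,
    (forall x, S x -> X x) /\ is_Cantor S /\ synd_scrambled S.
Proof.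
move=> HX [z [Xz Hu]].
have Hu' : unc (fun y => X y /\ SProx y z) := Hu.
exists (fun x => exists s, x = Phi X z s).
have Hdist : forall s s', s <> s' -> Phi X z s <> Phi X z s'.
  move=> s s' Hss Heq.
  have [j Hj] : exists j, s j <> s' j.
    apply: NNPP => Hn; apply: Hss; apply: functional_extensionality => j.
    by apply: NNPP => Hj; apply: Hn; exists j.
  have [t [_ Ht]] := Phi_far Hu' s s' j j.+1 Hj (ltnSn j).
  by apply: Ht; rewrite Heq.
split; first by move=> x [s ->]; apply: (Phi_X HX Hu').
split.
  split; first by exists (Phi X z (fun _ => false)), (fun _ => false).
  split.
    move=> u Hun.
    have [sg Hsg] := choice_fun Hun.
    have [phi [tau [Hphi Htau]]] := bool_compact sg.
    exists phi, (Phi X z tau); split => //; split; first by exists tau.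
    move=> k; exists k => n Hn; rewrite Hsg.
    apply: (agree_le (nn_ge Hu' k)); apply: (Phi_close Hu' (sg (phi n)) tau k) => i Hi; apply: Htau; lia.
  split; last exact: all_totally_disconnected.
  move=> x [s ->] k.
  pose tau := fun i => if i == k then ~~ s k else s i.
  exists (Phi X z tau); split; first by exists tau.
  split.
    apply: Hdist => Hst; have := congr1 (fun f => f k) Hst; rewrite /tau eqxx.
    by case: (s k).
  apply: (agree_le (nn_ge Hu' k)); apply: (Phi_close Hu' s tau k) => i Hi.
  by rewrite /tau; have -> : (i == k) = false by apply/eqP; lia.
split.
  exists (Phi X z (fun _ => false)), (Phi X z (fun _ => true)).
  split; first by exists (fun _ => false).
  split; first by exists (fun _ => true).
  apply: Hdist => H; have := congr1 (fun f => f 0) H; done.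
move=> x y [s ->] [s' ->] Hne; split.
  apply: (Ysyn_SProx (z := z)) => j; exists (LL X z j.+1 j); exact: Phi_Ysyn.
move=> Has.
have [j Hj] : exists j, s j <> s' j.
  apply: NNPP => Hn; apply: Hne; congr (Phi X z _); apply: functional_extensionality => j.
  by apply: NNPP => Hj; apply: Hn; exists j.
have [N HN] := Has 1.
have [t [Ht Hd]] := Phi_far Hu' s s' j (N + j.+1) Hj ltac:(lia).
apply: Hd; have := HN t ltac:(lia) 0 (ltnSn 0); rewrite /shiftn addn0; done.
Qed.
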